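(* $L_{\text{mpal}}$ can be verified with bounded error $\epsilon$ by an ADfA with $|\Sigma|+2$ affine states. Moreover, the protocol achieves perfect completeness.
   Context: $L_{\text{mpal}}=\{x \sigma x^R\mid x\in \Sigma^*, \sigma\in \Sigma\}$, and $\epsilon<1/2$ is rational. An affine state of an $m$-state affine register is a vector $v\in\mathbb{R}^m$ whose entries sum to $1$; affine operators are real matrices whose columns each sum to $1$; weighting observes basis state $e_j$ with probability $|v_j|/\|v\|_1$. A (one-way) ADfA is a deterministic finite automaton reading the input $¢ w\$$ (with left end-marker ¢ and right end-marker \$) left to right in real time, equipped with finitely many affine registers updated by affine operators with rational entries (unless stated otherwise) depending on the deterministic state and scanned symbol; after reading \$, if the deterministic state is accepting, each register is weighted once and the input is accepted iff every observed outcome lies in that register's accepting set. The ADfA acts as verifier in an Arthur–Merlin interactive proof system: it exchanges symbols with an all-powerful prover through a communication cell and reveals all its deterministic states, head moves and weighting outcomes to the prover (public coins). $V$ verifies $L$ with error $\epsilon$ if there is a prover such that every $w\in L$ is accepted with probability at least $1-\epsilon$, and for every $w\notin L$ and every prover, $w$ is rejected with probability at least $1-\epsilon$. Perfect completeness means every $w\in L$ is accepted with probability $1$. *)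

(* Defs.v *)
From HB Require Import structures.
From mathcomp Require Import all_boot all_order all_algebra.
Set Implicit Arguments. Unset Strict Implicit. Unset Printing Implicit Defensive.
Import Order.TTheory GRing.Theory Num.Theory.
Local Open Scope ring_scope.

Inductive tsym (S : Type) := LEnd | Sym of S | REnd.
Arguments LEnd {S}. Arguments REnd {S}.

Definition tape (S : Type) (w : seq S) : seq (tsym S) :=
  LEnd :: map (@Sym S) w ++ [:: REnd].

Definition mpal (S : Type) (w : seq S) : Prop :=
  exists (x : seq S) (s : S), w = x ++ s :: rev x.

(* At each step in state q scanning a, it writes [vout q a] to the
   communication cell, the prover answers r, then the deterministic state
   becomes [vdelta q a r] and register i is updated by [vop q a r i]. *)
Record verifier (S : Type) := Verifier {
  vQ : finType;
  vG : finType;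
  vk : nat;
  vdim : 'I_vk -> nat;
  vq0 : vQ;
  vacc : {set vQ};
  vout : vQ -> tsym S -> vG;
  vdelta : vQ -> tsym S -> vG -> vQ;
  vop : vQ -> tsym S -> vG -> forall i : 'I_vk, 'M[rat]_(vdim i);
  vinit : forall i : 'I_vk, 'cV[rat]_(vdim i);
  vaccset : forall i : 'I_vk, {set 'I_(vdim i)};
  vinit_affine : forall i, \sum_j vinit i j ord0 = 1;
  vop_affine : forall q a g i (j : 'I_(vdim i)), \sum_l vop q a g i l j = 1
}.

(* A (deterministic, w.l.o.g.) prover: given the input and the full public
   transcript so far (states, verifier messages, previous answers) and the
   current state and message, it answers a communication symbol. *)
Definition prover (S : Type) (V : verifier S) :=
  seq S -> seq (vQ V * vG V * vG V) -> vQ V -> vG V -> vG V.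

Definition regs (S : Type) (V : verifier S) :=
  forall i : 'I_(vk V), 'cV[rat]_(@vdim S V i).

Definition config (S : Type) (V : verifier S) :=
  (vQ V * regs V * seq (vQ V * vG V * vG V))%type.

Definition step (S : Type) (V : verifier S) (P : prover V) (w : seq S)
    (c : config V) (a : tsym S) : config V :=
  let: (q, rg, h) := c in
  let m := @vout S V q a in
  let r := P w h q m in
  (@vdelta S V q a r, (fun i => @vop S V q a r i *m rg i), rcons h (q, m, r)).

Definition run (S : Type) (V : verifier S) (P : prover V) (w : seq S) : config V :=
  foldl (step P w) (@vq0 S V, @vinit S V, [::]) (tape w).

(* Weighting a register state v: probability that the observed basis state
   lies in A, i.e. sum_{j in A} |v_j| / ||v||_1. *)
Definition weight_in (n : nat) (v : 'cV[rat]_n) (A : {set 'I_n}) : rat :=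
  (\sum_(j in A) `|v j ord0|) / (\sum_j `|v j ord0|).

Definition acc_prob (S : Type) (V : verifier S) (P : prover V) (w : seq S) : rat :=
  let: (q, rg, _) := run P w in
  if q \in vacc V then \prod_(i < vk V) weight_in (rg i) (@vaccset S V i) else 0.

Definition verifies_with_error (S : Type) (V : verifier S) (L : seq S -> Prop)
    (eps : rat) : Prop :=
  (exists P : prover V, forall w, L w -> acc_prob P w >= 1 - eps) /\
  (forall w, ~ L w -> forall P : prover V, 1 - acc_prob P w >= 1 - eps).

Definition perfect_completeness (S : Type) (V : verifier S)
    (L : seq S -> Prop) : Prop :=
  exists P : prover V, forall w, L w -> acc_prob P w = 1.

Definition affine_states (S : Type) (V : verifier S) : nat :=
  (\sum_(i < vk V) @vdim S V i)%N.

(* Main.v *)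
Require Import Defs.
From HB Require Import structures.
From mathcomp Require Import all_boot all_order all_algebra ring lra zify.
Import Order.TTheory GRing.Theory Num.Theory.
Local Open Scope ring_scope.
Set Implicit Arguments. Unset Strict Implicit.

Definition i0 {k} : 'I_(k.+3) := ord0.
Definition i1 {k} : 'I_(k.+3) := @Ordinal (k.+3) 1 isT.
Definition i2 {k} : 'I_(k.+3) := @Ordinal (k.+3) 2 isT.

Definition rw k (a b c : rat) (j : 'I_(k.+3)) :=
  (if j == i0 then a else 0) + (if j == i1 then b else 0) + c.
Definition mkop k (a b c d e g : rat) : 'M[rat]_(k.+3) := \matrix_(i, j)
  if i == i0 then rw a b c j else if i == i1 then rw d e g j
  else if i == i2 then 1 - rw a b c j - rw d e g j else 0.
Arguments mkop {k}.

Lemma sum_ifeq n (j0 : 'I_n) (x : 'I_n -> rat) :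
  \sum_j (if j == j0 then x j else 0) = x j0.
Proof. by rewrite -big_mkcond big_pred1_eq. Qed.

Lemma if3 k (i : 'I_(k.+3)) (A B C : rat) :
  (if i == i0 then A else if i == i1 then B else if i == i2 then C else 0) =
  (if i == i0 then A else 0) + (if i == i1 then B else 0) + (if i == i2 then C else 0).
Proof.
case: (eqVneq i i0) => [H|h0]; first by subst i; rewrite /= addr0 addr0.
case: (eqVneq i i1) => [H|h1]; first by subst i; rewrite /= add0r addr0.
case: (eqVneq i i2) => [H|h2]; first by subst i; rewrite /= !add0r.
by rewrite !addr0.
Qed.

Lemma ifmul (b : bool) (x y : rat) : (if b then x else 0) * y = if b then x * y else 0.
Proof. by case: b; rewrite ?mul0r. Qed.

Lemma mkop_col k (a b c d e g : rat) (j : 'I_(k.+3)) : \sum_i mkop a b c d e g i j = 1.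
Proof.
under eq_bigr => i _ do rewrite mxE if3.
rewrite !big_split /= !sum_ifeq /=.
by ring.
Qed.

Lemma sum_r k (a b c : rat) (v : 'cV[rat]_(k.+3)) :
  \sum_j (rw a b c j * v j ord0)
  = a * v i0 ord0 + b * v i1 ord0 + c * \sum_j v j ord0.
Proof.
under eq_bigr => j _ do rewrite /rw !mulrDl !ifmul.
by rewrite !big_split /= !sum_ifeq mulr_sumr.
Qed.

Lemma mkop_mul k (a b c d e g : rat) (v : 'cV[rat]_(k.+3)) : \sum_j v j ord0 = 1 ->
  mkop a b c d e g *m v = \col_i
   (if i == i0 then a * v i0 ord0 + b * v i1 ord0 + c
    else if i == i1 then d * v i0 ord0 + e * v i1 ord0 + g
    else if i == i2 then 1 - (a * v i0 ord0 + b * v i1 ord0 + c)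
                          - (d * v i0 ord0 + e * v i1 ord0 + g) else 0).
Proof.
move=> hs; apply/matrixP => i j; rewrite !mxE (ord1 j).
under eq_bigr => l _ do rewrite mxE.
case: (i == i0); first by rewrite sum_r hs mulr1.
case: (i == i1); first by rewrite sum_r hs mulr1.
case: (i == i2); last by rewrite big1 // => l _; rewrite mul0r.
under eq_bigr => l _ do rewrite !mulrBl mul1r.
by rewrite !sumrB !sum_r hs !mulr1.
Qed.

Lemma mkop_sum k (a b c d e g : rat) (v : 'cV[rat]_(k.+3)) : \sum_j v j ord0 = 1 ->
  \sum_i (mkop a b c d e g *m v) i ord0 = 1.
Proof.
move=> hs.
under eq_bigr => i _ do rewrite mxE.
rewrite exchange_big /=.
under eq_bigr => j _ do rewrite -mulr_suml mkop_col mul1r.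
exact: hs.
Qed.

Definition dg (S : finType) (a : S) : nat := (enum_rank a).+1.
Definition BB (S : finType) : nat := #|S|.+1.

Fixpoint numr (S : finType) (s : seq S) : nat :=
  if s is a :: t then (dg a + BB S * numr t)%N else 0%N.

Lemma numr_rcons (S : finType) (y : seq S) a :
  numr (rcons y a) = (numr y + dg a * BB S ^ size y)%N.
Proof.
elim: y => [|b y IH] /=; first by rewrite expn0 muln1 add0n muln0 addn0.
by rewrite IH mulnDr expnS mulnCA addnA.
Qed.

Lemma dg_lt (S : finType) (a : S) : (dg a < BB S)%N.
Proof. by rewrite /dg /BB ltnS; case: (enum_rank a) => /= m; rewrite cardE. Qed.

Lemma numr_inj (S : finType) (s t : seq S) : numr s = numr t -> s = t.
Proof.
elim: s t => [|a s IH] [|b t] //=.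
move=> h.
have hab : dg a = dg b.
  have := congr1 (fun x => x %% BB S)%N h.
  by rewrite /= ![(dg _ + _)%N]addnC ![(BB S * _)%N]mulnC !modnMDl !modn_small ?dg_lt.
move: h; rewrite hab => /addnI /eqP; rewrite eqn_mul2l /BB /= => /eqP /IH ->.
by move: hab; rewrite /dg => -[] /ord_inj /enum_rank_inj ->.
Qed.

Definition dl (S : Type) (q : bool * bool) (a : tsym S) (r : bool) : bool * bool :=
  match q, a with
  | (false, false), Sym _ => (r, false)
  | (false, false), LEnd => (false, false)
  | (true, false), REnd => (true, true)
  | (true, false), _ => (true, false)
  | _, _ => (false, true)
  end.

Definition idop k : 'M[rat]_(k.+3) := mkop 1 0 0 0 1 0.

Definition op (S : finType) k (al : rat) (q : bool * bool) (a : tsym S) (r : bool)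
  : 'M[rat]_(k.+3) :=
  match q, a with
  | (false, false), Sym s => if r then idop k else mkop (BB S)%:R 0 (dg s)%:R 0 1 0
  | (true, false), Sym s => mkop 1 (- (dg s)%:R) 0 0 (BB S)%:R 0
  | (true, false), REnd => mkop al 0 0 (- al) 0 0
  | _, _ => idop k
  end.

Arguments op {S} k al q a r.
Definition vinit0 k : 'cV[rat]_(k.+3) := \col_j (if j == i1 then 1 else 0).

Lemma vinit0_sum k : \sum_j vinit0 k j ord0 = 1.
Proof. under eq_bigr => j _ do rewrite mxE. by rewrite sum_ifeq. Qed.

Lemma op_col (S : finType) k al q (a : tsym S) r (j : 'I_(k.+3)) :
  \sum_l op k al q a r l j = 1.
Proof.
case: q => [[] []]; case: a => [|s|] /=; try case: r; exact: mkop_col.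
Qed.

Arguments op_col {S} k al q a r j.
Definition V (S : finType) k al : verifier S :=
  @Verifier S (bool * bool)%type bool 1 (fun _ => k.+3) (false, false)
    [set (true, true)] (fun _ _ => true) (@dl S)
    (fun q a r _ => op k al q a r) (fun _ => vinit0 k) (fun _ => [set i2])
    (fun _ => vinit0_sum k) (fun q a g _ j => op_col k al q a g j).

Lemma mk0 k (a b c d e g : rat) (v : 'cV[rat]_(k.+3)) : \sum_j v j ord0 = 1 ->
  (mkop a b c d e g *m v) i0 ord0 = a * v i0 ord0 + b * v i1 ord0 + c.
Proof. by move=> hs; rewrite mkop_mul // mxE. Qed.
Lemma mk1 k (a b c d e g : rat) (v : 'cV[rat]_(k.+3)) : \sum_j v j ord0 = 1 ->
  (mkop a b c d e g *m v) i1 ord0 = d * v i0 ord0 + e * v i1 ord0 + g.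
Proof. by move=> hs; rewrite mkop_mul // mxE. Qed.

Lemma op_sum (S : finType) k al q (a : tsym S) r (v : 'cV[rat]_(k.+3)) :
  \sum_j v j ord0 = 1 -> \sum_j (op k al q a r *m v) j ord0 = 1.
Proof.
move=> hs; case: q => [[] []]; case: a => [|s|] /=; try case: r; exact: mkop_sum.
Qed.

Lemma inv (S : finType) k al (P : prover (V S k al)) (w u : seq S) :
  let c := foldl (step P w) (@vq0 S (V S k al), @vinit S (V S k al), [::]) (LEnd :: map (@Sym S) u) in
  [/\ size c.2 = (size u).+1, \sum_j (c.1.2 ord0) j ord0 = 1 &
  ((c.1.1 = (false,false) /\ (c.1.2 ord0) i0 ord0 = (numr (rev u))%:R /\ (c.1.2 ord0) i1 ord0 = 1 /\
     (forall i, (i < size u)%N -> exists h0 q0 m0, size h0 = i.+1 /\ P w h0 q0 m0 = false))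
  \/ (c.1.1 = (true,false) /\ exists x s y, u = x ++ s :: y /\
       (c.1.2 ord0) i0 ord0 = (numr (rev x))%:R - (numr y)%:R /\
       (c.1.2 ord0) i1 ord0 = (BB S ^ size y)%:R /\
       exists h0 q0 m0, size h0 = (size x).+1 /\ P w h0 q0 m0 = true))].
Proof.
elim/last_ind: u => [|u a IH].
  rewrite /= /step /=.
  have hs := vinit0_sum k.
  split => //; first exact: mkop_sum.
  left; split => //; split; first by rewrite mk0 // !mxE /=; ring.
  by split => //; rewrite mk1 // !mxE /=; ring.
rewrite map_rcons -rcons_cons foldl_rcons.
move: IH => /=.
case: (foldl _ _ _) => [[q rg] h] /= [hs hsum hcase].
rewrite size_rcons hs size_rcons; split => //; first exact: op_sum.
case: hcase => [[-> [hE [hp hP]]] | [-> [x [s [y [hu [hE [hp hP]]]]]]]] /=.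
  case hr: (P w h (false, false) true) => /=.
    right; split => //; exists u, a, [::]; split; first by rewrite cats1.
    rewrite /idop mk0 // mk1 // hE hp /=; split; first by ring.
    split; first by rewrite expn0; ring.
    by exists h, (false, false), true; rewrite hs.
  left; split => //; rewrite mk0 // mk1 // hE hp rev_rcons /=.
  split; first by rewrite natrD natrM; ring.
  split; first by ring.
  move=> i; rewrite ltnS leq_eqVlt => /orP [/eqP ->|/hP //].
  by exists h, (false, false), true; rewrite hs.
right; split => //; exists x, s, (rcons y a); split; first by rewrite hu rcons_cat.
rewrite mk0 // mk1 // hE hp numr_rcons size_rcons expnS.
split; first by rewrite natrD natrM; ring.
split; first by rewrite natrM; ring.
exact: hP.
Qed.

Lemma final_weight k al (v : 'cV[rat]_(k.+3)) : \sum_j v j ord0 = 1 ->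
  weight_in (mkop al 0 0 (- al) 0 0 *m v) [set i2] = 1 / (2 * `|al * v i0 ord0| + 1).
Proof.
move=> hs; rewrite /weight_in mkop_mul // big_set1 !mxE /=.
under eq_bigr => j _ do rewrite !mxE !(fun_if (@Num.norm _ _)) normr0 if3.
rewrite !big_split /= !sum_ifeq.
have -> : 1 - (al * v i0 ord0 + 0 * v i1 ord0 + 0) - (- al * v i0 ord0 + 0 * v i1 ord0 + 0) = 1
  by ring.
by rewrite normr1 !mul0r !addr0 mulNr normrN; congr (_ / _); ring.
Qed.

Lemma acc_eq (S : finType) k al (P : prover (V S k al)) (w : seq S) :
  acc_prob P w =
  let: (q, rg, h) := foldl (step P w) (@vq0 S (V S k al), @vinit S (V S k al), [::]) (LEnd :: map (@Sym S) w) in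
  if dl q (@REnd S) (P w h q true) == (true, true) then
    weight_in (op k al q (@REnd S) (P w h q true) *m rg ord0) [set i2] else 0.
Proof.
rewrite /acc_prob /run /tape cats1 -rcons_cons foldl_rcons.
case: (foldl _ _ _) => [[q rg] h] /=.
by rewrite inE big_ord1.
Qed.

Lemma nat_dist1 (m n : nat) : m != n -> 1 <= `|(m%:R - n%:R : rat)|.
Proof.
case: (ltngtP m n) => // h _.
  by rewrite -opprB normrN -natrB ?(ltnW h) // normr_nat ler1n subn_gt0.
by rewrite -natrB ?(ltnW h) // normr_nat ler1n subn_gt0.
Qed.

Lemma sound (S : finType) k (eps : rat) (he : 0 < eps) (P : prover (V S k eps^-1)) w :
  ~ mpal w -> acc_prob P w <= eps.
Proof.
move=> hn; rewrite acc_eq.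
have := inv P w w => /=.
case: (foldl _ _ _) => [[q rg] h] /= [_ hsum hcase].
case: hcase => [[-> _] | [-> [x [s [y [hw [hE _]]]]]]] /=; first exact: ltW.
rewrite final_weight // hE.
have hne : numr (rev x) != numr y.
  apply/negP => /eqP /numr_inj hxy; apply: hn; exists x, s; by rewrite hw -hxy.
have := nat_dist1 hne.
set t := `|_ - _|.
rewrite normrM (@gtr0_norm _ eps^-1) ?invr_gt0 // -/t => ht.
have hd : 0 < 2 * (eps^-1 * t) + 1.
  have : 0 <= eps^-1 * t by rewrite mulr_ge0 // ?invr_ge0 ?ltW //; lra.
  lra.
rewrite ler_pdivrMr //.
have -> : eps * (2 * (eps^-1 * t) + 1) = 2 * t + eps by field; rewrite lt0r_neq0.
lra.
Qed.

Definition Pc (S : finType) k al : prover (V S k al) :=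
  fun w h _ _ => size h == ((size w)./2).+1.

Lemma complete (S : finType) k al (w : seq S) : mpal w -> acc_prob (@Pc S k al) w = 1.
Proof.
case=> x0 [s0 hw].
have hhalf : ((size w)./2 = size x0)%N.
  by rewrite hw size_cat /= size_rev addnS addnn; exact: (half_bit_double _ true).
rewrite acc_eq; have := inv (@Pc S k al) w w => /=.
case: (foldl _ _ _) => [[q rg] h] /= [_ hsum hcase].
case: hcase => [[_ [_ [_ hP]]] | [-> [x [s [y [hw' [hE [_ [h0 [q0 [m0 [hs0 hP]]]]]]]]]]]].
  have : (size x0 < size w)%N by rewrite hw size_cat /= addnS ltnS leq_addr.
  move=> /hP [h0 [q0 [m0 [hs]]]].
  by rewrite /Pc hs hhalf eqxx.
move: hP; rewrite /Pc hs0 hhalf eqSS => /eqP hsz.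
have := hw; rewrite hw' => /eqP; rewrite eqseq_cat // => /andP [/eqP hx /eqP [_ hy]].
rewrite /= final_weight // hE hy hx subrr mulr0 normr0 mulr0 add0r.
by rewrite divr1.
Qed.

Lemma empty_case (S : finType) : #|S| = 0%N -> forall w : seq S, ~ mpal w.
Proof. by move=> h0 w [x [s _]]; move: (card0_eq h0 s). Qed.

Definition idm : 'M[rat]_2 := \matrix_(i, j) (if i == j then 1 else 0).
Lemma id_col (j : 'I_2) : \sum_l idm l j = 1.
Proof. under eq_bigr => l _ do rewrite mxE. by rewrite sum_ifeq. Qed.
Lemma e0_sum : \sum_j (\col_(j < 2) (if j == ord0 then 1 else 0) : 'cV[rat]_2) j ord0 = 1.
Proof. under eq_bigr => l _ do rewrite mxE. by rewrite sum_ifeq. Qed.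

Definition V0 (S : finType) : verifier S :=
  @Verifier S bool bool 1 (fun _ => 2%N) false set0 (fun _ _ => true)
    (fun _ _ _ => false) (fun _ _ _ _ => idm)
    (fun _ => \col_(j < 2) (if j == ord0 then 1 else 0)) (fun _ => set0)
    (fun _ => e0_sum) (fun _ _ _ _ j => id_col j).

Unset Implicit Arguments.
Theorem theorem3 (S : finType) (eps : rat) (heps : 0 < eps < 1 / 2) :
  exists V : verifier S,
    affine_states V = (#|S| + 2)%N /\
    verifies_with_error V (@mpal S) eps /\
    perfect_completeness V (@mpal S).
Proof.
case/andP: heps => he he2.
case hS: #|S| => [|k].
  have hn := empty_case hS.
  exists (V0 S); split; first by rewrite /affine_states big_ord1.
  have P0 : prover (V0 S) := fun _ _ _ m => m.
  split; last by exists P0 => w /hn.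
  split; first by exists P0 => w /hn.
  move=> w _ P; rewrite /acc_prob.
  case: (run P w) => [[q rg] h] /=; rewrite in_set0; lra.
exists (V S k eps^-1); split; first by rewrite /affine_states big_ord1 addn2.
split; last by exists (@Pc S k eps^-1) => w /complete ->.
split.
  exists (@Pc S k eps^-1) => w /complete ->; lra.
move=> w hn P; have := sound he P hn; lra.
Qed.
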